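(* Let $G$ be a triangular graph and run the procedure described in the context on $G$, starting with two vertices of the outer triangle as the distinguished vertices $v_1,v_2$ (clockwise consecutive, with the edge $v_1v_2$ given some orientation). Then in the resulting orientation every interior vertex of $G$ has in-degree exactly $3$; that is, the restriction of the constructed orientation to the interior edges of $G$ is an internal $3$-orientation.
   Context: A triangular graph is a plane graph with at least 3 vertices all of whose faces, including the outer one, are triangles; its interior vertices/edges are those not on the outer triangle. A near triangulation is a 2-connected plane graph whose outer face is bounded by a cycle (the outer cycle) and all of whose inner faces are triangles. An internal 3-orientation of a triangular graph is an orientation of its interior edges in which every interior vertex has in-degree exactly 3. The procedure: its input is a near triangulation $H$ with two distinguished vertices $v_1,v_2$ such that $v_2$ immediately follows $v_1$ clockwise on the outer cycle; the edge $v_1v_2$ is already oriented, other edges are not. It orients every edge and gives each edge a strength 1 or 2, as follows. (Recursive step) If the outer cycle has a chord $v_av_b$, it splits the outer cycle into cycles $C_1$ (containing $v_1,v_2$) and $C_2$; let $H_1,H_2$ be the subgraphs formed by $C_1$, $C_2$ with their interiors. Run the procedure first on $H_1$ with distinguished vertices $v_1,v_2$, and then on $H_2$ with the endpoints of the chord as distinguished vertices, ordered so that the second immediately follows the first clockwise on the outer cycle of $H_2$ (the chord has been oriented during the run on $H_1$). (Orienting step) If the outer cycle has no chord, let $v_3$ be the vertex immediately following $v_2$ clockwise on the outer cycle (the central vertex). Every edge of the current graph incident to $v_3$ that lies on the outer cycle is oriented towards $v_3$ and given strength 1; every other edge of the current graph incident to $v_3$ is oriented away from $v_3$ and given strength 2.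 Then $v_3$ is deleted, and if vertices other than $v_1,v_2$ remain, the procedure is called recursively on the remaining graph with the same distinguished vertices $v_1,v_2$. *)

(* Defs.v *)
From mathcomp Require Import all_boot.

Set Implicit Arguments.
Unset Strict Implicit.
Unset Printing Implicit Defensive.

Section Triangulations.
Variable V : finType.

(* An oriented triangular face is a triple (a,b,c): the face is bounded by
   the directed cycle a -> b -> c -> a.  A set of faces is always taken
   closed under cyclic rotation. *)
Definition rot (t : V * V * V) : V * V * V :=
  let: (a, b, c) := t in (b, c, a).

Definition rot_closed (S : {set V * V * V}) : Prop :=
  forall t, t \in S -> rot t \in S.

Definition in_tri (v : V) (t : V * V * V) : bool :=
  let: (a, b, c) := t in [|| v == a, v == b | v == c].

Definition dedge (S : {set V * V * V}) (a b : V) : bool :=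
  [exists c, (a, b, c) \in S].

Definition adj (S : {set V * V * V}) (a b : V) : bool :=
  dedge S a b || dedge S b a.

(* G is a triangular graph: T is the set of (rotations of) its faces,
   consistently oriented, forming a triangulated 2-sphere whose 1-skeleton
   is the (simple) graph G with vertex set V. *)
Record triangular_graph (T : {set V * V * V}) : Prop := {
  tg_rot : rot_closed T;
  tg_distinct : forall a b c, (a, b, c) \in T -> [&& a != b, b != c & c != a];
  tg_unique : forall a b c c', (a, b, c) \in T -> (a, b, c') \in T -> c = c';
  tg_sym : forall a b, dedge T a b -> dedge T b a;
  tg_card : 3 <= #|V|;
  tg_cover : forall v : V, exists w, adj T v w;
  tg_link : forall v a b, dedge T v a -> dedge T v b ->
              connect (fun x y => (v, x, y) \in T) a b;
  tg_conn : forall a b, connect (adj T) a b;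
  tg_euler : #|V| + #|T| %/ 3 = #|[set e : V * V | dedge T e.1 e.2]| %/ 2 + 2
}.

(* Convention: the triples of the inner faces list their vertices in
   clockwise order.  For a near triangulation given by its inner faces S,
   the outer cycle is formed by the directed edges occurring in exactly one
   direction, and it is then traversed clockwise. *)

Definition outer_next (S : {set V * V * V}) (a b : V) : bool :=
  dedge S a b && ~~ dedge S b a.

Definition on_outer (S : {set V * V * V}) (a : V) : bool :=
  [exists b, outer_next S a b].

Definition outer_edge (S : {set V * V * V}) (a b : V) : bool :=
  outer_next S a b || outer_next S b a.

Definition chord (S : {set V * V * V}) (a b : V) : bool :=
  [&& adj S a b, on_outer S a, on_outer S b & ~~ outer_edge S a b].

Definition vertex_of (S : {set V * V * V}) (v : V) : bool :=
  [exists t in S, in_tri v t].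

Definition str1 : 'I_3 := @Ordinal 3 1 isT.
Definition str2 : 'I_3 := @Ordinal 3 2 isT.

(* Orienting step at the central vertex v3: (x, y, s) means that the edge
   xy is oriented from x to y and given strength s. *)
Definition orient_at (S : {set V * V * V}) (v3 : V) : {set V * V * 'I_3} :=
  [set t : V * V * 'I_3 |
     let: (x, y, s) := t in
     adj S x y &&
     (if outer_edge S x y then (y == v3) && (s == str1)
      else (x == v3) && (s == str2))].

Definition delete_vertex (S : {set V * V * V}) (v : V) : {set V * V * V} :=
  [set t in S | ~~ in_tri v t].

(* run S v1 v2 O : the procedure, run on the near triangulation whose inner
   faces are S, with distinguished vertices v1, v2, can produce the
   orientations/strengths O (of all edges other than v1v2). *)
Inductive run : {set V * V * V} -> V -> V -> {set V * V * 'I_3} -> Prop :=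
| run_split (S : {set V * V * V}) (v1 v2 a b x y : V)
    (S1 S2 : {set V * V * V}) (O1 O2 : {set V * V * 'I_3}) :
    chord S a b ->
    rot_closed S1 -> S1 :|: S2 = S -> S1 :&: S2 = set0 ->
    (forall p q r r', (p, q, r) \in S1 -> (q, p, r') \in S2 ->
        [set p; q] = [set a; b]) ->
    outer_next S1 v1 v2 ->
    [set x; y] = [set a; b] -> outer_next S2 x y ->
    run S1 v1 v2 O1 -> run S2 x y O2 ->
    run S v1 v2 (O1 :|: O2)
| run_orient_stop (S : {set V * V * V}) (v1 v2 v3 : V) :
    (forall a b, ~~ chord S a b) ->
    outer_next S v2 v3 ->
    ~~ [exists w, [&& vertex_of S w, w != v3, w != v1 & w != v2]] ->
    run S v1 v2 (orient_at S v3)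
| run_orient_rec (S : {set V * V * V}) (v1 v2 v3 : V) (O : {set V * V * 'I_3}) :
    (forall a b, ~~ chord S a b) ->
    outer_next S v2 v3 ->
    [exists w, [&& vertex_of S w, w != v3, w != v1 & w != v2]] ->
    run (delete_vertex S v3) v1 v2 O ->
    run S v1 v2 (orient_at S v3 :|: O).

(* The plane triangular graph: faces T, outer face o (a triple of T). *)
Definition outer_faces (o : V * V * V) : {set V * V * V} :=
  [set o; rot o; rot (rot o)].

Definition inner_faces (T : {set V * V * V}) (o : V * V * V) :=
  T :\: outer_faces o.

Definition interior_vertex (o : V * V * V) (v : V) : bool := ~~ in_tri v o.

Definition interior_edge (T : {set V * V * V}) (o : V * V * V) (x y : V) :=
  adj T x y && (interior_vertex o x || interior_vertex o y).

Definition internal_3_orientation (T : {set V * V * V}) (o : V * V * V)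
    (A : {set V * V}) : Prop :=
  [/\ forall x y, (x, y) \in A -> interior_edge T o x y,
      forall x y, interior_edge T o x y -> ((x, y) \in A) (+) ((y, x) \in A)
    & forall v, interior_vertex o v -> #|[set x | (x, v) \in A]| = 3].

Definition interior_restriction (T : {set V * V * V}) (o : V * V * V)
    (O : {set V * V * 'I_3}) : {set V * V} :=
  [set e : V * V | interior_edge T o e.1 e.2 &&
                   [exists s : 'I_3, (e.1, e.2, s) \in O]].

End Triangulations.

(* Main.v *)
Require Import Defs.
From mathcomp Require Import all_boot.
Set Implicit Arguments. Unset Strict Implicit. Unset Printing Implicit Defensive.

Section Basics.
Variable V : finType.
Implicit Types (S : {set V * V * V}) (u v w x y z a b c : V).

Lemma rotS S a b c : rot_closed S -> (a,b,c) \in S -> (b,c,a) \in S.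
Proof. by move=> h /h. Qed.

Lemma rotS2 S a b c : rot_closed S -> (a,b,c) \in S -> (c,a,b) \in S.
Proof. by move=> h H; apply: (rotS h); apply: (rotS h). Qed.

Lemma dedgeP S a b : reflect (exists c, (a,b,c) \in S) (dedge S a b).
Proof. exact: existsP. Qed.

Lemma dedgeI S a b c : (a,b,c) \in S -> dedge S a b.
Proof. by move=> h; apply/dedgeP; exists c. Qed.

Lemma vertexP S v : rot_closed S ->
  reflect (exists x y, (v,x,y) \in S) (vertex_of S v).
Proof.
move=> hr; apply: (iffP existsP) => [[[[a b] c]] /andP [hS /or3P [] /eqP ->]|[x [y h]]].
- by exists b, c.
- by exists c, a; apply: rotS hS.
- by exists a, b; apply: rotS2 hS.
by exists (v,x,y); rewrite h /= eqxx.
Qed.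

Lemma vertexI S v x y : (v,x,y) \in S -> vertex_of S v.
Proof. by move=> h; apply/existsP; exists (v,x,y); rewrite h /= eqxx. Qed.

Lemma connect_back (e : rel V) (P : pred V) :
  (forall p q, e p q -> P q -> P p) -> forall y x, connect e y x -> P x -> P y.
Proof.
move=> cl y x /connectP [s pth ->]; elim: s y pth => [|z s IH] y //= /andP [eyz pzs] Pl.
by apply: cl eyz _; apply: IH.
Qed.

Lemma connect_fwd (e : rel V) (P : pred V) :
  (forall p q, e p q -> P p -> P q) -> forall x y, connect e x y -> P x -> P y.
Proof.
move=> cl x y /connectP [s pth ->]; elim: s x pth => [|z s IH] x //= /andP [exz pzs] Px.
by apply: IH => //; apply: cl exz Px.
Qed.

Lemma connect_func (e : rel V) s t t' :
  (forall p q q', e p q -> e p q' -> q = q') ->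
  (forall q, ~~ e t q) -> (forall q, ~~ e t' q) ->
  connect e s t -> connect e s t' -> t = t'.
Proof.
move=> fn nt nt' /connectP [p pth Et] /connectP [p' pth' Et'].
elim: p s p' pth pth' Et Et' => [|z p IH] s [|z' p'] //=.
- by move=> _ _ -> ->.
- by move=> _ /andP [h _] Et _; move: (nt z'); rewrite Et h.
- by move=> /andP [h _] _ _ Et; move: (nt' z); rewrite Et h.
move=> /andP [h1 p1] /andP [h2 p2] E1 E2.
have ez := fn _ _ _ h1 h2; subst z'.
exact: IH p1 p2 E1 E2.
Qed.

Lemma set2_eq (p q a b : V) : [set p; q] = [set a; b] ->
  ((p == a) && (q == b)) || ((p == b) && (q == a)).
Proof.
move=> E.
have hp : p \in [set a; b] by rewrite -E !inE eqxx.
have hq : q \in [set a; b] by rewrite -E !inE eqxx orbT.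
have ha : a \in [set p; q] by rewrite E !inE eqxx.
have hb : b \in [set p; q] by rewrite E !inE eqxx orbT.
move: hp hq ha hb; rewrite !inE.
case/orP=> /eqP ?; case/orP=> /eqP ?; case/orP=> /eqP ?; case/orP=> /eqP ?; subst;
  by rewrite ?eqxx ?orbT.
Qed.

End Basics.

Section Link.
Variable V : finType.
Variable T : {set V * V * V}.
Hypothesis HT : triangular_graph T.
Implicit Types (S : {set V * V * V}) (u v w x y z a b c : V).

Lemma distT a b c : (a,b,c) \in T -> [&& a != b, b != c & c != a].
Proof. move=> h; have := tg_distinct HT h; done. Qed.

Lemma uniqT a b c c' : (a,b,c) \in T -> (a,b,c') \in T -> c = c'.
Proof. move=> h h'; exact (tg_unique HT h h'). Qed.

Lemma puniqT u x x' y : (u,x,y) \in T -> (u,x',y) \in T -> x = x'.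
Proof.
move=> h h'; have r := tg_rot HT; exact (tg_unique HT (rotS2 r h) (rotS2 r h')).
Qed.

Lemma nbrT u x y : (u,x,y) \in T -> dedge T u y.
Proof. move=> h; have r := tg_rot HT; exact (tg_sym HT (dedgeI (rotS2 r h))). Qed.

Lemma subT S t : S \subset T -> t \in S -> t \in T.
Proof. by move/subsetP; apply. Qed.

Definition arc S u : rel V := fun x y => (u,x,y) \in S.

Definition su S := forall u b b', outer_next S u b -> outer_next S u b' -> b = b'.
Definition conn S := forall a b, vertex_of S a -> vertex_of S b -> connect (adj S) a b.

Lemma cyc u (B : pred V) x0 : dedge T u x0 -> x0 \in B ->
  (forall x, x \in B -> exists2 p, p \in B & (u,p,x) \in T) ->
  forall y, dedge T u y -> y \in B.
Proof.
move=> h0 B0 cl y hy.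
have := (tg_link HT hy h0).
move/(connect_back (P := B)); apply => // p q hpq qB.
by case: (cl q qB) => p' p'B hp'; rewrite (puniqT hpq hp').
Qed.

Section WithS.
Variable S : {set V * V * V}.
Hypothesis sT : S \subset T.
Hypothesis rS : rot_closed S.

Lemma dedgeT a b : dedge S a b -> dedge T a b.
Proof. by case/dedgeP=> c h; apply: (dedgeI (c:=c)); apply: subT h. Qed.

Lemma full_link u x0 : ~~ on_outer S u -> dedge S u x0 ->
  forall y, dedge T u y -> dedge S u y.
Proof.
move=> no h0; apply: (cyc (B := [pred y | dedge S u y]) (x0:=x0)) => //.
  exact: dedgeT.
move=> x hx; have {}hx : dedge S u x := hx.
have: ~~ outer_next S u x by apply: contra no => h; apply/existsP; exists x.
rewrite /outer_next hx /= negbK => /dedgeP [c hc].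
have h1 := rotS rS hc.
by exists c; [apply: dedgeI h1 | apply: subT h1].
Qed.

Lemma L1 b u : outer_next S b u -> on_outer S u.
Proof.
case/andP=> hbu nub; case: (boolP (on_outer S u)) => // no.
case/dedgeP: hbu => c hc; have h1 := rotS rS hc.
have := full_link no (dedgeI h1) (nbrT (subT sT h1)).
by rewrite (negbTE nub).
Qed.

Lemma TC w x y : (w,x,y) \in S -> (w,y,x) \in S -> ~~ on_outer S w.
Proof.
move=> h1 h2; apply/negP => /existsP [s /andP [hs ns]].
have cl : forall z, z \in [pred z | (z == x) || (z == y)] ->
    exists2 p, p \in [pred z | (z == x) || (z == y)] & (w,p,z) \in T.
  move=> z /orP [] /eqP ->.
    by exists y; [rewrite inE eqxx orbT | apply: subT h2].
  by exists x; [rewrite inE eqxx | apply: subT h1].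
have x0B : x \in [pred z | (z == x) || (z == y)] by rewrite inE eqxx.
have := cyc (dedgeT (dedgeI h1)) x0B cl (dedgeT hs); rewrite inE.
case/orP=> /eqP E; subst s; move/negP: ns; apply.
  exact: (dedgeI (rotS2 rS h2)).
exact: (dedgeI (rotS2 rS h1)).
Qed.

Hypothesis uS : su S.

Lemma reach_start u s : outer_next S u s -> forall x, dedge S u x -> connect (arc S u) s x.
Proof.
move=> hs x hx; case: (boolP (connect (arc S u) s x)) => // nc.
pose B := [pred z | dedge S u z && ~~ connect (arc S u) s z].
have cl : forall z, z \in B -> exists2 p, p \in B & (u,p,z) \in T.
  move=> z; rewrite inE => /andP [hz nz].
  have nzs : ~~ outer_next S u z.
    by apply/negP => o; have Esz := uS hs o; subst; rewrite connect0 in nz.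
  rewrite /outer_next hz /= negbK in nzs.
  case/dedgeP: nzs => c hc; have h1 := rotS rS hc.
  exists c; last exact: subT h1.
  rewrite inE (dedgeI h1) /=; apply: contra nz => hsc.
  by apply: connect_trans hsc (connect1 _).
have xB : x \in B by rewrite inE hx nc.
have hsT : dedge T u s by case/andP: hs => hs' _; apply: dedgeT.
have := cyc (dedgeT hx) xB cl hsT; rewrite inE.
by rewrite /= connect0 andbF.
Qed.

Lemma root_reach u x0 : dedge S u x0 ->
  exists r, dedge S u r /\ forall x, dedge S u x -> connect (arc S u) r x.
Proof.
move=> h0; case: (boolP (on_outer S u)) => [/existsP [s hs] | no].
  by exists s; split; [case/andP: hs | apply: reach_start].
exists x0; split => // x hx.
have hT := tg_link HT (dedgeT h0) (dedgeT hx).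
apply: (connect_fwd (P := connect (arc S u) x0)) hT (connect0 _ _) => p q hpq hp.
apply: connect_trans hp (connect1 _).
have := full_link no h0 (dedgeI hpq) => /dedgeP [q' hq'].
by rewrite /arc (uniqT hpq (subT sT hq')).
Qed.

Lemma nbr_reach u r : (forall x, dedge S u x -> connect (arc S u) r x) ->
  forall w, adj S u w -> connect (arc S u) r w.
Proof.
move=> hr w /orP [] // /dedgeP [c hc]; first by apply: hr; apply: dedgeI hc.
have h1 := rotS rS hc.
by apply: connect_trans (hr _ (dedgeI h1)) (connect1 _).
Qed.

Lemma end_uniq u e e' : outer_next S e u -> outer_next S e' u -> e = e'.
Proof.
move=> he he'; have /existsP [s hs] := L1 he.
have R := nbr_reach (reach_start hs).
apply: (connect_func (e := arc S u) (s := s)).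
- by move=> p q q' h h'; apply: uniqT (subT sT h) (subT sT h').
- by move=> q; apply/negP => h; case/andP: he => _ /negP; apply; apply: dedgeI h.
- by move=> q; apply/negP => h; case/andP: he' => _ /negP; apply; apply: dedgeI h.
- by apply: R; rewrite /adj; case/andP: he => ->; rewrite orbT.
- by apply: R; rewrite /adj; case/andP: he' => ->; rewrite orbT.
Qed.

Lemma iso_nbr x y z : (x,y,z) \in S -> ~~ dedge S y x -> ~~ dedge S x z ->
  forall w, adj S x w -> (w == y) || (w == z).
Proof.
move=> h ny nz w hw.
have hs : outer_next S x y by rewrite /outer_next (dedgeI h) ny.
have := nbr_reach (reach_start hs) hw.
move/(connect_fwd (P := [pred q | (q == y) || (q == z)])); apply; last by rewrite /= eqxx.
move=> p q hpq /orP [] /eqP E; subst p.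
  by rewrite /= (uniqT (subT sT hpq) (subT sT h)) eqxx orbT.
by move: nz; rewrite (dedgeI hpq).
Qed.

Hypothesis cS : conn S.

Lemma iso_face x y z : (x,y,z) \in S -> ~~ dedge S y x -> ~~ dedge S z y ->
  ~~ dedge S x z -> forall w, vertex_of S w -> w \in [set x; y; z].
Proof.
move=> h n1 n2 n3 w hw.
have hx := iso_nbr h n1 n3.
have hy := iso_nbr (rotS rS h) n2 n1.
have hz := iso_nbr (rotS2 rS h) n3 n2.
have := cS (vertexI h) hw.
move/(connect_fwd (P := [pred q | q \in [set x; y; z]])); apply; last by rewrite /= !inE eqxx.
move=> p q hpq; rewrite /= !inE => hp.
have [E|E|E] : [\/ p = x, p = y | p = z] by case/orP: hp => [/orP [] /eqP ->|/eqP ->]; [constructor 1|constructor 2|constructor 3].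
all: subst p.
- by case/orP: (hx _ hpq) => ->; rewrite ?orbT.
- by case/orP: (hy _ hpq) => ->; rewrite ?orbT.
- by case/orP: (hz _ hpq) => ->; rewrite ?orbT.
Qed.

End WithS.
End Link.

Section Orient.
Variable V : finType.
Implicit Types (S : {set V * V * V}) (O : {set V * V * 'I_3}) (u v w x y z a b c : V).

Definition E O x y := [exists s : 'I_3, (x,y,s) \in O].
Definition indeg O u := #|[set x | E O x u]|.
Definition pairne x y v1 v2 := ~~ (((x == v1) && (y == v2)) || ((x == v2) && (y == v1))).
Definition expected S v1 v2 u : nat :=
  if (u == v1) || (u == v2) then 0 else if on_outer S u then 2
  else if vertex_of S u then 3 else 0.

Definition Pgood S v1 v2 O :=
  [/\ forall x y, E O x y -> adj S x y && pairne x y v1 v2,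
      forall x y, adj S x y -> pairne x y v1 v2 -> E O x y != E O y x
    & forall u, indeg O u = expected S v1 v2 u].

Lemma EP O x y : reflect (exists s, (x,y,s) \in O) (E O x y).
Proof. exact: existsP. Qed.

Lemma EU O1 O2 x y : E (O1 :|: O2) x y = E O1 x y || E O2 x y.
Proof.
apply/EP/orP => [[s]|[] /EP [s h]]; last 2 first.
- by exists s; rewrite inE h.
- by exists s; rewrite inE h orbT.
by rewrite inE => /orP [] h; [left|right]; apply/EP; exists s.
Qed.

Lemma adjC S x y : adj S x y = adj S y x.
Proof. by rewrite /adj orbC. Qed.

Lemma outer_edgeC S x y : outer_edge S x y = outer_edge S y x.
Proof. by rewrite /outer_edge orbC. Qed.

Lemma pairneC x y v1 v2 : pairne x y v1 v2 = pairne y x v1 v2.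
Proof. by rewrite /pairne; case: (x == v1); case: (x == v2); case: (y == v1); case: (y == v2). Qed.

Lemma orient_E S v x y : E (orient_at S v) x y =
  adj S x y && (if outer_edge S x y then y == v else x == v).
Proof.
apply/EP/andP => [[s]|[h1 h2]].
  rewrite /orient_at inE /= => /andP [-> h]; split => //.
  by case: (outer_edge S x y) h => /andP [].
case E1: (outer_edge S x y) h2 => h2.
  by exists str1; rewrite /orient_at inE /= h1 E1 h2.
by exists str2; rewrite /orient_at inE /= h1 E1 h2.
Qed.

Lemma orient_one S v x y : adj S x y -> x != y -> (x == v) || (y == v) ->
  E (orient_at S v) x y != E (orient_at S v) y x.
Proof.
move=> h nxy hv; rewrite !orient_E [adj S y x]adjC h outer_edgeC /=.
have nyx : y != x by rewrite eq_sym.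
by case: (outer_edge S y x); case/orP: hv => /eqP E1; subst;
  rewrite ?eqxx ?(negbTE nxy) ?(negbTE nyx).
Qed.

Lemma adj_vertex S x y : rot_closed S -> adj S x y -> vertex_of S x.
Proof.
move=> rS /orP [] /dedgeP [c h]; first exact: vertexI h.
exact: vertexI (rotS rS h).
Qed.

Lemma delete_in S v t : (t \in delete_vertex S v) = (t \in S) && ~~ in_tri v t.
Proof. by rewrite /delete_vertex inE. Qed.

Lemma delete_sub S v : delete_vertex S v \subset S.
Proof. by apply/subsetP => t; rewrite delete_in => /andP []. Qed.

Lemma in_tri_rot v t : in_tri v (Defs.rot t) = in_tri v t.
Proof. by case: t => [[a b] c] /=; case: (v == a); case: (v == b); case: (v == c). Qed.

Lemma delete_rot S v : rot_closed S -> rot_closed (delete_vertex S v).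
Proof.
move=> rS t; rewrite !delete_in in_tri_rot => /andP [h ->].
by rewrite andbT; apply: rS.
Qed.

Lemma dedge_sub S1 S a b : S1 \subset S -> dedge S1 a b -> dedge S a b.
Proof. by move/subsetP=> s /dedgeP [c h]; apply: (dedgeI (c:=c)); apply: s. Qed.

Lemma adj_sub S1 S a b : S1 \subset S -> adj S1 a b -> adj S a b.
Proof. by move=> s /orP [] h; rewrite /adj (dedge_sub s h) ?orbT. Qed.

Lemma vertex_sub S1 S a : S1 \subset S -> vertex_of S1 a -> vertex_of S a.
Proof.
move/subsetP=> s /existsP [t /andP [h1 h2]].
by apply/existsP; exists t; rewrite h2 s.
Qed.

End Orient.

Section Run1.
Variable V : finType.
Variable T : {set V * V * V}.
Hypothesis HT : triangular_graph T.
Implicit Types (S : {set V * V * V}) (O : {set V * V * 'I_3}) (u v w x y z a b c : V).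

Definition Inv S := [/\ S \subset T, rot_closed S, su S & conn S].

Lemma only_three S v1 v2 v3 :
  ~~ [exists w, [&& vertex_of S w, w != v3, w != v1 & w != v2]] ->
  forall w, vertex_of S w -> [|| w == v3, w == v1 | w == v2].
Proof.
move=> now w hw; case: (boolP [|| w == v3, w == v1 | w == v2]) => // nw.
case/negP: now; apply/existsP; exists w.
by move: nw; rewrite !negb_or hw => /and3P [-> -> ->].
Qed.

Lemma stop_face S v1 v2 v3 : S \subset T -> rot_closed S ->
  outer_next S v2 v3 ->
  ~~ [exists w, [&& vertex_of S w, w != v3, w != v1 & w != v2]] ->
  (v1, v2, v3) \in S.
Proof.
move=> sT rS o23 now; case/andP: o23 => /dedgeP [c hc] _.
have hv := only_three now (vertexI (rotS2 rS hc)).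
have /and3P [d1 d2 d3] := distT HT (subT sT hc).
move: hv; rewrite (eq_sym c v3) (negbTE d2) (negbTE d3) orbF /= => /eqP E1; subst c.
exact: rotS2 rS hc.
Qed.

Lemma R0 S v1 v2 O : run S v1 v2 O -> S \subset T -> rot_closed S -> dedge S v1 v2.
Proof.
elim => {S v1 v2 O}.
- move=> S v1 v2 a b x y S1 S2 O1 O2 _ _ U _ _ o1 _ _ _ _ _ _ sT rS.
  apply: (dedge_sub (S1 := S1)); first by rewrite -U subsetUl.
  by case/andP: o1.
- move=> S v1 v2 v3 _ o23 now sT rS.
  exact: dedgeI (stop_face sT rS o23 now).
- move=> S v1 v2 v3 O _ _ _ _ IH sT rS.
  apply: (dedge_sub (delete_sub S v3)); apply: IH.
    exact: subset_trans (delete_sub S v3) sT.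
  exact: delete_rot.
Qed.

End Run1.

Section Stop.
Variable V : finType.
Variable T : {set V * V * V}.
Hypothesis HT : triangular_graph T.
Implicit Types (S : {set V * V * V}) (O : {set V * V * 'I_3}) (u v w x y z a b c : V).

Lemma outer_vertex S u : on_outer S u -> vertex_of S u.
Proof. by case/existsP=> b /andP [/dedgeP [c h] _]; apply: vertexI h. Qed.

Lemma adj_neq S x y : S \subset T -> adj S x y -> x != y.
Proof.
move=> sT /orP [] /dedgeP [c h]; have /and3P [d1 _ _] := distT HT (subT sT h) => //.
by rewrite eq_sym.
Qed.

Lemma outer_adj S x y : outer_next S x y -> adj S x y.
Proof. by case/andP=> h _; rewrite /adj h. Qed.

Lemma outer_edge_adj S x y : outer_edge S x y -> adj S x y.
Proof. by case/orP=> /outer_adj //; rewrite adjC. Qed.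

Lemma pairne_v3 v1 v2 v3 x y : v3 != v1 -> v3 != v2 -> (x == v3) || (y == v3) ->
  pairne x y v1 v2.
Proof.
move=> n1 n2 /orP [] /eqP ->; rewrite /pairne (negbTE n1) (negbTE n2) ?andbF //.
Qed.

Lemma three_v3 v1 v2 v3 x y : [|| x == v3, x == v1 | x == v2] ->
  [|| y == v3, y == v1 | y == v2] -> x != y -> pairne x y v1 v2 ->
  (x == v3) || (y == v3).
Proof.
case/or3P=> /eqP ->; rewrite ?eqxx //; case/or3P=> /eqP ->; rewrite ?eqxx ?orbT //;
  by rewrite /pairne ?eqxx ?orbT.
Qed.

Lemma stop_good S v1 v2 v3 : S \subset T -> rot_closed S ->
  outer_next S v2 v3 ->
  ~~ [exists w, [&& vertex_of S w, w != v3, w != v1 & w != v2]] ->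
  Pgood S v1 v2 (orient_at S v3).
Proof.
move=> sT rS o23 now.
have F := stop_face HT sT rS o23 now.
have /and3P [d12 d23 d31] := distT HT (subT sT F).
have only := only_three now.
have o31 : outer_next S v3 v1.
  rewrite /outer_next (dedgeI (rotS2 rS F)) /=; apply/negP => /dedgeP [d hd].
  have /and3P [e1 e2 e3] := distT HT (subT sT hd).
  have := only _ (vertexI (rotS2 rS hd)).
  rewrite (eq_sym d v3) (negbTE e2) (negbTE e3) /= => /eqP E1; subst d.
  by case/andP: o23 => _ /negP; apply; apply: dedgeI (rotS rS hd).
have oe13 : outer_edge S v1 v3 by rewrite /outer_edge o31 orbT.
have oe23 : outer_edge S v2 v3 by rewrite /outer_edge o23.
have d13 : v1 != v3 by rewrite eq_sym.
have d32 : v3 != v2 by rewrite eq_sym.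
have onl x y : adj S x y -> [|| x == v3, x == v1 | x == v2].
  by move=> h; apply: only; apply: adj_vertex h.
split.
- move=> x y; rewrite orient_E => /andP [h1 h2]; rewrite h1 /=.
  apply: (pairne_v3 d31 d32).
  by case: (outer_edge S x y) h2 => ->; rewrite ?orbT.
- move=> x y h hp; apply: orient_one (adj_neq sT h) _ => //.
  exact: three_v3 (onl _ _ h) (onl _ _ (etrans (adjC S y x) h)) (adj_neq sT h) hp.
- move=> u; rewrite /indeg /expected.
  case: (eqVneq u v3) => [->|nu3].
    have -> : [set x | E (orient_at S v3) x v3] = [set v1; v2].
      apply/setP=> x; rewrite !inE orient_E eqxx.
      apply/idP/idP.
        case/andP=> h1 h2; have := onl _ _ h1.
        have nx3 : x != v3 by apply: adj_neq sT h1.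
        by rewrite (negbTE nx3).
      by case/orP=> /eqP ->; rewrite ?oe13 ?oe23 outer_edge_adj.
    rewrite cards2 d12 (eq_sym v3 v1) (negbTE d13) (negbTE d32) /=.
    by have -> : on_outer S v3 by apply/existsP; exists v1.
  have -> : [set x | E (orient_at S v3) x u] = set0.
    apply/setP=> x; rewrite !inE orient_E (negbTE nu3).
    apply/negP => /andP [h1 h2].
    have hx : x == v3 by case: (outer_edge S x u) h2.
    rewrite (eqP hx) in h1 h2.
    have := onl _ _ (etrans (adjC S u v3) h1); rewrite (negbTE nu3) /=.
    case/orP=> /eqP E1; rewrite E1 outer_edgeC in h2.
      by rewrite oe13 in h2.
    by rewrite oe23 in h2.
  rewrite cards0.
  case: ifP => // hu.
  have nv : ~~ vertex_of S u.
    apply/negP => /only; rewrite (negbTE nu3) /=; by rewrite hu.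
  by rewrite (negbTE nv); case: ifP => // /outer_vertex; rewrite (negbTE nv).
Qed.

End Stop.

Section Rec.
Variable V : finType.
Variable T : {set V * V * V}.
Hypothesis HT : triangular_graph T.
Variables (S : {set V * V * V}) (v1 v2 v3 : V).
Hypotheses (sT : S \subset T) (rS : rot_closed S) (uS : su S) (cS : conn S).
Hypothesis o12 : outer_next S v1 v2.
Hypothesis nch : forall a b, ~~ chord S a b.
Hypothesis o23 : outer_next S v2 v3.
Hypothesis hw : [exists w, [&& vertex_of S w, w != v3, w != v1 & w != v2]].
Implicit Types (u w x y z a b c : V).

Let S' := delete_vertex S v3.

Lemma ne12 : v1 != v2.
Proof. by case/andP: o12 => /dedgeP [c h] _; case/and3P: (distT HT (subT sT h)). Qed.
Lemma ne32 : v3 != v2.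
Proof. by case/andP: o23 => /dedgeP [c h] _; case/and3P: (distT HT (subT sT h)); rewrite eq_sym. Qed.
Lemma ne31 : v3 != v1.
Proof.
apply/eqP => E; have := o23; rewrite E => /andP [h _].
by case/andP: o12 => _ /negP.
Qed.
Lemma on3 : on_outer S v3. Proof. exact (L1 HT sT rS o23). Qed.
Lemma on1 : on_outer S v1. Proof. by apply/existsP; exists v2. Qed.
Lemma on2 : on_outer S v2. Proof. by apply/existsP; exists v3. Qed.

Lemma nochord a b : adj S a b -> on_outer S a -> on_outer S b -> outer_edge S a b.
Proof.
move=> h1 h2 h3; have := nch a b; rewrite /chord h1 h2 h3 /=.
by rewrite negbK.
Qed.

Lemma no3 x y z : (forall q, vertex_of S q -> q \in [set x; y; z]) -> False.
Proof.
move=> H; case/existsP: hw => w /and4P [hw0 n3 n1 n2].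
have hv1 : vertex_of S v1 by apply: outer_vertex on1.
have hv2 : vertex_of S v2 by apply: outer_vertex on2.
have hv3 : vertex_of S v3 by apply: outer_vertex on3.
have := uniq_leq_size (s1 := [:: v1; v2; v3; w]) (s2 := [:: x; y; z]).
have U : uniq [:: v1; v2; v3; w].
  have a1 : v1 != v3 by rewrite eq_sym ne31.
  have a2 : v2 != v3 by rewrite eq_sym ne32.
  have a3 : v1 != w by rewrite eq_sym.
  have a4 : v2 != w by rewrite eq_sym.
  have a5 : v3 != w by rewrite eq_sym.
  by rewrite /= !inE !negb_or ne12 a1 a2 a3 a4 a5.
move/(_ U) => /= H'.
have : 4 <= 3; last by [].
apply: H' => q; rewrite !inE => /orP [/eqP->|/orP [/eqP->|/orP [/eqP->|/eqP->]]];
  [move: (H _ hv1)|move: (H _ hv2)|move: (H _ hv3)|move: (H _ hw0)];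
  by rewrite !inE -!orbA.
Qed.

Lemma inS' t : (t \in S') = (t \in S) && ~~ in_tri v3 t.
Proof. exact: delete_in. Qed.

Lemma sub' : S' \subset T. Proof. exact: subset_trans (delete_sub S v3) sT. Qed.
Lemma rot' : rot_closed S'. Proof. exact: delete_rot. Qed.
Lemma subS' : S' \subset S. Proof. exact: delete_sub. Qed.

Lemma inS'I x y z : (x,y,z) \in S -> x != v3 -> y != v3 -> z != v3 -> (x,y,z) \in S'.
Proof.
by move=> h n1 n2 n3; rewrite inS' h /= !negb_or eq_sym n1 eq_sym n2 eq_sym n3.
Qed.

Lemma inS'E x y z : (x,y,z) \in S' -> [&& x != v3, y != v3 & z != v3].
Proof.
by rewrite inS' /= => /andP [_]; rewrite !negb_or !(eq_sym v3) => /and3P [-> -> ->].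
Qed.

Lemma notv3 x y : adj S' x y -> x != v3.
Proof.
case/orP=> /dedgeP [c h]; have /and3P [] := inS'E h => //.
Qed.

Lemma D1 x y c : (x,y,c) \in S -> x != v3 -> y != v3 -> adj S' x y.
Proof.
move=> h nx ny.
case: (eqVneq c v3) => [E|nc]; last by rewrite /adj (dedgeI (inS'I h nx ny nc)).
subst c.
case: (boolP (dedge S y x)) => [/dedgeP [d hd]|nyx].
  case: (eqVneq d v3) => [E|nd]; last by rewrite /adj (dedgeI (inS'I hd ny nx nd)) orbT.
  subst d; have := TC HT sT rS (rotS2 rS h) (rotS2 rS hd).
  by rewrite on3.
have onx : on_outer S x by apply/existsP; exists y; rewrite /outer_next (dedgeI h).
have ony : on_outer S y.
  by apply: (L1 HT sT rS (b:=x)); rewrite /outer_next (dedgeI h).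
have d3x : dedge S v3 x := dedgeI (rotS2 rS h).
have dy3 : dedge S y v3 := dedgeI (rotS rS h).
have n1 : ~~ dedge S x v3.
  have a : adj S x v3 by rewrite /adj d3x orbT.
  have := nochord a onx on3.
  by case/orP => /andP [h1 h2] //; rewrite d3x in h2.
have n2 : ~~ dedge S v3 y.
  have a : adj S y v3 by rewrite /adj dy3.
  have := nochord a ony on3.
  by case/orP => /andP [h1 h2] //; rewrite dy3 in h2.
case: (no3 (iso_face HT sT rS uS cS h nyx n2 n1)).
Qed.

Lemma D1' x y : adj S x y -> x != v3 -> y != v3 -> adj S' x y.
Proof.
move=> /orP [] /dedgeP [c h] nx ny; first exact: D1 h nx ny.
by rewrite adjC; apply: D1 h ny nx.
Qed.


Lemma ne_face x y z : (x,y,z) \in S -> [&& x != y, y != z & z != x].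
Proof. by move=> h; apply: (distT HT (subT sT h)). Qed.

Lemma start' u b : outer_next S' u b -> outer_next S u b \/ (u,v3,b) \in S.
Proof.
case/andP=> /dedgeP [c hc] nb.
have /and3P [nu nb3 nc3] := inS'E hc.
have hcS := subT subS' hc.
case: (boolP (dedge S b u)) => [/dedgeP [d hd]|nbu]; last by left; rewrite /outer_next (dedgeI hcS) nbu.
right; case: (eqVneq d v3) => [E|nd]; first by subst d; apply: rotS rS hd.
by case/negP: nb; apply: dedgeI (inS'I hd nb3 nu nd).
Qed.

Lemma mixed u b b' : outer_next S u b -> (u,v3,b') \in S -> b != v3 -> False.
Proof.
move=> s1 f2 nb.
have a : adj S u v3 by rewrite /adj (dedgeI f2).
have onu : on_outer S u by apply/existsP; exists b.
case/orP: (nochord a onu on3) => o.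
  by move: nb; rewrite (uS s1 o) eqxx.
by case/andP: o => _ /negP; apply; apply: dedgeI f2.
Qed.

Lemma su' : su S'.
Proof.
move=> u b b' h h'.
have nb : b != v3 by case/andP: h => /dedgeP [c hc] _; case/and3P: (inS'E hc).
have nb' : b' != v3 by case/andP: h' => /dedgeP [c hc] _; case/and3P: (inS'E hc).
case: (start' h) (start' h') => [s1|f1] [s2|f2].
- exact: uS s1 s2.
- by case: (mixed s1 f2 nb).
- by case: (mixed s2 f1 nb').
- exact (uniqT HT (subT sT f1) (subT sT f2)).
Qed.

Lemma conn' : conn S'.
Proof.
have /existsP [s3 hs] := on3.
have R := nbr_reach rS (reach_start HT sT rS uS hs).
have ns3 : forall n, adj S v3 n -> connect (adj S') s3 n.
  move=> n hn; have := R n hn; apply: connect_sub => p q h.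
  have /and3P [d1 d2 d3] := ne_face h.
  apply: connect1; apply: (D1 (c:=v3)); first exact: rotS rS h.
    by rewrite eq_sym.
  exact: d3.
have s3v : vertex_of S s3.
  by apply: (adj_vertex rS (y:=v3)); rewrite adjC; apply: outer_adj hs.
have all : forall z, vertex_of S' z -> connect (adj S') s3 z.
  move=> z hz; have hzS := vertex_sub subS' hz.
  have nz : z != v3.
    by case/(vertexP _ rot'): hz => x [y] /inS'E /and3P [].
  pose P := [pred q | (q == v3) || connect (adj S') s3 q].
  suff : P z by move=> /orP [/eqP E|//]; rewrite E eqxx in nz.
  apply: (connect_fwd (P := P) _ (cS s3v hzS)); last by apply/orP; right; apply: connect0.
  move=> p q hpq.
  case: (eqVneq p v3) => [Ep|np] hp.
    by subst p; apply/orP; right; apply: ns3.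
  case: (eqVneq q v3) => [Eq|nq]; first by apply/orP; left; apply/eqP.
  move/orP: hp => [/eqP E|hp]; first by rewrite E eqxx in np.
  apply/orP; right.
  by apply: connect_trans hp (connect1 _); apply: D1'.
have symm : connect_sym (adj S') := sym_connect_sym (fun x y => adjC S' x y).
move=> a b ha hb; apply: connect_trans (all b hb).
by rewrite symm; apply: all.
Qed.

Lemma Inv' : Inv T S'.
Proof. split; [exact: sub' | exact: rot' | exact: su' | exact: conn']. Qed.

Lemma far u : u != v3 -> ~~ adj S v3 u ->
  (forall b, dedge S' u b = dedge S u b) /\ (forall b, dedge S' b u = dedge S b u).
Proof.
move=> nu na; split=> b; apply/idP/idP; try exact: dedge_sub subS'.
- case/dedgeP=> c h; have /and3P [d1 d2 d3] := ne_face h.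
  have nb : b != v3.
    by apply/eqP => E; subst b; case/negP: na; rewrite /adj (dedgeI h) orbT.
  have nc : c != v3.
    by apply/eqP => E; subst c; case/negP: na; rewrite /adj (dedgeI (rotS2 rS h)).
  exact: dedgeI (inS'I h nu nb nc).
- case/dedgeP=> c h.
  have nb : b != v3.
    by apply/eqP => E; subst b; case/negP: na; rewrite /adj (dedgeI h).
  have nc : c != v3.
    by apply/eqP => E; subst c; case/negP: na; rewrite /adj (dedgeI (rotS rS h)) orbT.
  exact: dedgeI (inS'I h nb nu nc).
Qed.

Lemma far_outer u : u != v3 -> ~~ adj S v3 u -> on_outer S' u = on_outer S u.
Proof.
move=> nu na; have [f1 f2] := far nu na.
by apply: eq_existsb => b; rewrite /outer_next f1 f2.
Qed.

Lemma far_vertex u : u != v3 -> ~~ adj S v3 u -> vertex_of S' u = vertex_of S u.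
Proof.
move=> nu na; have [f1 f2] := far nu na.
apply/idP/idP; first exact: vertex_sub subS'.
case/(vertexP _ rS) => x [y] h.
have := dedgeI h; rewrite -f1 => /dedgeP [c hc]; exact: vertexI hc.
Qed.


Lemma TC3 x y : (v3,x,y) \in S -> (v3,y,x) \in S -> False.
Proof. by move=> h1 h2; have := TC HT sT rS h1 h2; rewrite on3. Qed.

Lemma D2 u : u != v3 -> on_outer S u -> on_outer S' u.
Proof.
move=> nu hu.
case: (boolP (adj S v3 u)) => [a|na]; last by rewrite far_outer.
rewrite adjC in a.
case/orP: (nochord a hu on3) => o.
- case/andP: (o) => /dedgeP [m hm] nvu.
  have /and3P [_ nm3 nmu] := ne_face hm.
  rewrite eq_sym in nm3.
  case: (boolP (dedge S u m)) => [/dedgeP [m' hm'] | num].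
  + have nm'3 : m' != v3.
      by apply/eqP => E; subst m'; apply: (TC3 (rotS rS hm) (rotS2 rS hm')).
    apply/existsP; exists m; rewrite /outer_next (dedgeI (inS'I hm' nu nm3 nm'3)) /=.
    apply/negP => /dedgeP [d hd]; have /and3P [_ _ nd] := inS'E hd.
    have hd' := rotS rS (subT subS' hd).
    by move: nd; rewrite (puniqT HT (subT sT hd') (subT sT hm)) eqxx.
  + have onm : on_outer S m.
      by apply/existsP; exists u; rewrite /outer_next (dedgeI (rotS2 rS hm)) num.
    have a2 : adj S v3 m by rewrite /adj (dedgeI (rotS rS hm)).
    have nm : ~~ dedge S m v3.
      case/orP: (nochord a2 on3 onm) => /andP [_ h] //.
      by rewrite (dedgeI (rotS rS hm)) in h.
    by case: (no3 (iso_face HT sT rS uS cS hm nvu nm num)).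
- case/andP: (o) => /dedgeP [p hp] nuv.
  have hp2 := rotS rS hp.
  have /and3P [_ np3 npu] := ne_face hp2.
  case: (boolP (dedge S p u)) => [/dedgeP [q hq] | npu'].
  + have nq3 : q != v3.
      by apply/eqP => E; subst q; apply: (TC3 hp (rotS2 rS hq)).
    have e : outer_next S' p u.
      rewrite /outer_next (dedgeI (inS'I hq np3 nu nq3)) /=.
      apply/negP => /dedgeP [d hd]; have /and3P [_ _ nd] := inS'E hd.
      by move: nd; rewrite (uniqT HT (subT sT (subT subS' hd)) (subT sT hp2)) eqxx.
    exact (L1 HT sub' rot' e).
  + have onp : on_outer S p.
      by apply: (L1 HT sT rS (b:=u)); rewrite /outer_next (dedgeI hp2) npu'.
    have a2 : adj S p v3 by rewrite /adj (dedgeI (rotS rS hp2)).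
    have nv : ~~ dedge S v3 p.
      case/orP: (nochord a2 onp on3) => /andP [_ h] //.
      by rewrite (dedgeI (rotS rS hp2)) in h.
    by case: (no3 (iso_face HT sT rS uS cS hp2 npu' nv nuv)).
Qed.

Lemma D3 u : u != v3 -> ~~ on_outer S u -> vertex_of S u -> adj S v3 u -> on_outer S' u.
Proof.
move=> nu no hv a.
case/(vertexP _ rS): hv => x0 [y0] h0.
have dT : dedge T u v3.
  case/orP: a => h; first exact (tg_sym HT (dedgeT sT h)).
  exact (dedgeT sT h).
have := full_link HT sT rS no (dedgeI h0) dT => /dedgeP [x hx].
have := full_link HT sT rS no (dedgeI h0) (nbrT HT (subT sT hx)) => /dedgeP [y hy].
have /and3P [_ nx _] := ne_face hx; rewrite eq_sym in nx.
have ny : y != v3.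
  by apply/eqP => E; subst y; apply: (TC3 (rotS rS hx) (rotS2 rS hy)).
apply/existsP; exists x; rewrite /outer_next (dedgeI (inS'I hy nu nx ny)) /=.
apply/negP => /dedgeP [d hd]; have /and3P [_ _ nd] := inS'E hd.
have hd' := rotS rS (subT subS' hd).
by move: nd; rewrite (puniqT HT (subT sT hd') (subT sT hx)) eqxx.
Qed.


Lemma rec_good O : Pgood S' v1 v2 O -> Pgood S v1 v2 (orient_at S v3 :|: O).
Proof.
case=> IH1 IH2 IH3.
have EO3 x y : E O x y -> (x != v3) && (y != v3).
  move=> h; have /andP [a _] := IH1 _ _ h.
  by rewrite (notv3 a) (notv3 (etrans (adjC S' y x) a)).
have Eor x y : E (orient_at S v3) x y -> adj S x y && ((x == v3) || (y == v3)).
  rewrite orient_E => /andP [-> h] /=.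
  by case: (outer_edge S x y) h => ->; rewrite ?orbT.
have nEO x y : (x == v3) || (y == v3) -> E O x y = false.
  move=> hv; apply/negbTE/negP => h; have /andP [n1 n2] := EO3 _ _ h.
  by case/orP: hv => /eqP E1; [rewrite E1 eqxx in n1 | rewrite E1 eqxx in n2].
split.
- move=> x y; rewrite EU => /orP [h|h].
    have /andP [a hv] := Eor _ _ h; rewrite a /=.
    exact: pairne_v3 ne31 ne32 hv.
  have /andP [a p] := IH1 _ _ h.
  by rewrite (adj_sub subS' a) p.
- move=> x y a p; rewrite !EU.
  case: (boolP ((x == v3) || (y == v3))) => hv.
    rewrite (nEO _ _ hv) nEO ?orbF; last by rewrite orbC.
    exact: orient_one a (adj_neq HT sT a) hv.
  have n1 : E (orient_at S v3) x y = false.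
    rewrite orient_E; move: hv; rewrite negb_or => /andP [/negbTE -> /negbTE ->].
    by case: (outer_edge S x y); rewrite andbF.
  have n2 : E (orient_at S v3) y x = false.
    rewrite orient_E; move: hv; rewrite negb_or => /andP [/negbTE -> /negbTE ->].
    by case: (outer_edge S y x); rewrite andbF.
  rewrite n1 n2 /=; apply: IH2 => //.
  by move: hv; rewrite negb_or => /andP [h1 h2]; apply: D1'.
- move=> u; rewrite /indeg.
  case: (eqVneq u v3) => [->|nu].
    have /existsP [s3 hs] := on3.
    have -> : [set x | E (orient_at S v3 :|: O) x v3] = [set s3; v2].
      apply/setP => x; rewrite !inE EU (nEO x v3) ?eqxx ?orbT // orbF orient_E eqxx.
      apply/idP/idP.
        case/andP=> a h; have nx3 : x != v3 by exact (adj_neq HT sT a).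
        rewrite (negbTE nx3) in h.
        have h' : outer_edge S x v3 by move: h; case: (outer_edge S x v3).
        case/orP: h' => [o|o].
          by rewrite (end_uniq HT sT rS uS o o23) eqxx orbT.
        by rewrite (uS hs o) eqxx.
      case/orP=> /eqP ->.
        by rewrite adjC (outer_adj hs) /outer_edge hs orbT.
      by rewrite (outer_adj o23) /outer_edge o23.
    rewrite cards2.
    have -> : s3 != v2.
      apply/eqP => E1; subst s3; case/andP: o23 => _ /negP; apply.
      by case/andP: hs.
    by rewrite /expected (negbTE ne31) (negbTE ne32) on3.
  pose c := adj S v3 u && ~~ outer_edge S v3 u.
  have key x : E (orient_at S v3) x u = (x == v3) && c.
    rewrite orient_E (negbTE nu); case: (eqVneq x v3) => [->|nx] /=.
      by rewrite /c; case: (outer_edge S v3 u); rewrite ?andbF ?andbT.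
    by case: (outer_edge S x u); rewrite andbF.
  pose N := [set x | E O x u].
  have v3N : v3 \notin N by rewrite inE nEO ?eqxx.
  have -> : [set x | E (orient_at S v3 :|: O) x u] = if c then v3 |: N else N.
    apply/setP => x; rewrite inE EU key.
    by case cE: c; rewrite ?inE ?andbT ?andbF //=.
  have -> : #|if c then v3 |: N else N| = c + #|N|.
    by case: c key; rewrite ?cardsU1 ?v3N.
  have -> : #|N| = indeg O u by [].
  rewrite IH3 /expected.
  have cF : on_outer S u -> c = false.
    move=> hu; rewrite /c; case: (boolP (adj S v3 u)) => //= a.
    by rewrite (nochord a on3 hu).
  case: ifP => [h12|h12].
    rewrite cF //; case/orP: h12 => /eqP ->; [exact: on1 | exact: on2].
  case: (boolP (on_outer S u)) => hu.
    by rewrite (cF hu) (D2 nu hu).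
  case: (boolP (vertex_of S u)) => hv.
    case: (boolP (adj S v3 u)) => a.
      have -> : c.
        rewrite /c a /=; apply/negP => /orP [] o; case/negP: hu.
          exact (L1 HT sT rS o).
        by apply/existsP; exists v3.
      by rewrite (D3 nu hu hv a).
    by rewrite /c (negbTE a) (far_outer nu a) (negbTE hu) (far_vertex nu a) hv.
  have -> : c = false.
    rewrite /c; case: (boolP (adj S v3 u)) => //= a.
    by case/negP: hv; apply: (adj_vertex rS (y:=v3)); rewrite adjC.
  have nv' : vertex_of S' u = false.
    by apply/negbTE; apply: contra hv; apply: vertex_sub subS'.
  by rewrite nv'; case: ifP => // /outer_vertex; rewrite nv'.
Qed.

End Rec.

Lemma path_avoid (V : finType) (e : rel V) (P : pred V) bad x s :
  path e x s -> uniq (x :: s) -> last x s = bad -> x != bad -> P x ->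
  (forall p q, e p q -> P p -> q != bad -> P q) ->
  exists2 p, e p bad & P p.
Proof.
elim: s x => [|y s IH] x /=; first by move=> _ _ -> /negP.
move=> /andP [exy ps] /andP [nx us] El nb Px cl.
case: (eqVneq y bad) => [Ey|ny]; first by exists x => //; rewrite -Ey.
exact: (IH y ps us El ny (cl _ _ exy Px ny) cl).
Qed.

Section Side.
Variable V : finType.
Variable T : {set V * V * V}.
Hypothesis HT : triangular_graph T.
Variables (S Sa Sb : {set V * V * V}) (a b : V).
Hypotheses (sT : S \subset T) (rS : rot_closed S) (uS : su S) (cS : conn S).
Hypotheses (hU : Sa :|: Sb = S) (hI : Sa :&: Sb = set0).
Hypotheses (ra : rot_closed Sa) (rb : rot_closed Sb).
Hypothesis cab : forall p q r r', (p,q,r) \in Sa -> (q,p,r') \in Sb -> [set p; q] = [set a; b].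
Hypothesis cba : forall p q r r', (p,q,r) \in Sb -> (q,p,r') \in Sa -> [set p; q] = [set a; b].
Hypothesis haa : adj Sa a b.
Implicit Types (u w x y z p q r : V).

Lemma inSab t : (t \in S) = (t \in Sa) || (t \in Sb).
Proof. by rewrite -hU inE. Qed.

Lemma subA : Sa \subset S. Proof. by rewrite -hU subsetUl. Qed.
Lemma subB : Sb \subset S. Proof. by rewrite -hU subsetUr. Qed.

Lemma notboth t : t \in Sa -> t \in Sb -> False.
Proof. move=> h1 h2; have : t \in Sa :&: Sb by rewrite inE h1 h2. by rewrite hI inE. Qed.

Lemma isabP p q : [set p; q] = [set a; b] -> (p == a) || (p == b).
Proof. by move/set2_eq => /orP [] /andP [-> _]; rewrite ?orbT. Qed.

Lemma isabP2 p q : [set p; q] = [set a; b] -> (q == a) || (q == b).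
Proof. by move/set2_eq => /orP [] /andP [_ ->]; rewrite ?orbT. Qed.

Lemma prop u r q0 : ~~ ((u == a) || (u == b)) -> (u,r,q0) \in Sa ->
  forall z, connect (arc S u) r z -> forall q, (u,z,q) \in S -> (u,z,q) \in Sa.
Proof.
move=> nab h0 z hc.
pose P := [pred z | [forall q, ((u,z,q) \in S) ==> ((u,z,q) \in Sa)]].
suff : P z by move=> /forallP H q hq; move: (H q); rewrite hq.
apply: (connect_fwd (P := P) _ hc).
  move=> p q hpq /forallP Hp; apply/forallP => q2; apply/implyP => hq2.
  have hp : (u,p,q) \in Sa by move: (Hp q); rewrite (hpq : (u,p,q) \in S).
  move: hq2; rewrite inSab => /orP [//|hb].
  by case/negP: nab; apply: (isabP2 (cab (rotS2 ra hp) hb)).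
apply/forallP => q; apply/implyP => hq.
by rewrite (uniqT HT (subT sT hq) (subT sT (subT subA h0))).
Qed.

End Side.

Section Side2.
Variable V : finType.
Variable T : {set V * V * V}.
Hypothesis HT : triangular_graph T.
Variables (S Sa Sb : {set V * V * V}) (a b : V).
Hypotheses (sT : S \subset T) (rS : rot_closed S) (uS : su S) (cS : conn S).
Hypotheses (hU : Sa :|: Sb = S) (hI : Sa :&: Sb = set0).
Hypotheses (ra : rot_closed Sa) (rb : rot_closed Sb).
Hypothesis cab : forall p q r r', (p,q,r) \in Sa -> (q,p,r') \in Sb -> [set p; q] = [set a; b].
Hypothesis cba : forall p q r r', (p,q,r) \in Sb -> (q,p,r') \in Sa -> [set p; q] = [set a; b].
Implicit Types (u w x y z p q r : V).

Let hU' : Sb :|: Sa = S. Proof. by rewrite setUC. Qed.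
Let hI' : Sb :&: Sa = set0. Proof. by rewrite setIC. Qed.

Lemma dedgeSab p q : dedge S p q = dedge Sa p q || dedge Sb p q.
Proof.
apply/idP/idP.
  by case/dedgeP=> c; rewrite (inSab hU) => /orP [] h; rewrite (dedgeI h) ?orbT.
by case/orP => h; [apply: dedge_sub (subA hU) h | apply: dedge_sub (subB hU) h].
Qed.

Lemma adjSab p q : adj S p q = adj Sa p q || adj Sb p q.
Proof.
rewrite /adj !dedgeSab.
by case: (dedge Sa p q); case: (dedge Sb p q); case: (dedge Sa q p); case: (dedge Sb q p).
Qed.

Lemma L_side u : ~~ ((u == a) || (u == b)) -> vertex_of Sa u -> vertex_of Sb u -> False.
Proof.
move=> nab /(vertexP _ ra) [x [y hx]] /(vertexP _ rb) [x' [y' hx']].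
have hxS := subT (subA hU) hx.
have hx'S := subT (subB hU) hx'.
have [r [hr R]] := root_reach HT sT rS uS (dedgeI hxS).
case/dedgeP: hr => r' hr'.
move: (hr'); rewrite (inSab hU) => /orP [ha|hb].
  exact: (notboth hI (prop HT sT hU ra cab nab ha (R _ (dedgeI hx'S)) hx'S) hx').
exact: (notboth hI' (prop HT sT hU' rb cba nab hb (R _ (dedgeI hxS)) hxS) hx).
Qed.

Lemma onlyA u t : ~~ ((u == a) || (u == b)) -> vertex_of Sa u -> t \in S -> in_tri u t -> t \in Sa.
Proof.
move=> nab hv; rewrite (inSab hU) => /orP [//|hb] ht.
by case: (L_side nab hv); apply/existsP; exists t; rewrite hb.
Qed.

Lemma dedgeA u w : ~~ ((u == a) || (u == b)) -> vertex_of Sa u -> dedge Sa u w = dedge S u w.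
Proof.
move=> nab hv; apply/idP/idP; first exact: dedge_sub (subA hU).
by case/dedgeP=> c h; apply: (dedgeI (c:=c)); apply: (onlyA nab hv h); rewrite /= eqxx.
Qed.

Lemma dedgeA' u w : ~~ ((u == a) || (u == b)) -> vertex_of Sa u -> dedge Sa w u = dedge S w u.
Proof.
move=> nab hv; apply/idP/idP; first exact: dedge_sub (subA hU).
by case/dedgeP=> c h; apply: (dedgeI (c:=c)); apply: (onlyA nab hv h); rewrite /= eqxx orbT.
Qed.

Lemma outerA u : ~~ ((u == a) || (u == b)) -> vertex_of Sa u -> on_outer Sa u = on_outer S u.
Proof.
move=> nab hv; apply: eq_existsb => w.
by rewrite /outer_next (dedgeA _ nab hv) (dedgeA' _ nab hv).
Qed.


Lemma startA u z : outer_next Sa u z -> outer_next S u z \/ [set u; z] = [set a; b].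
Proof.
case/andP=> hz nz; case: (boolP (dedge S z u)) => [/dedgeP [c hc]|n].
  right; have hb : (z,u,c) \in Sb.
    by move: hc; rewrite (inSab hU) => /orP [ha|//]; rewrite (dedgeI ha) in nz.
  by case/dedgeP: hz => c0 h0; apply: cab h0 hb.
by left; rewrite /outer_next (dedge_sub (subA hU) hz) n.
Qed.

Lemma set2_other u z z' : [set u; z] = [set u; z'] -> u != z -> z = z'.
Proof.
move=> E nz; have : z \in [set u; z'] by rewrite -E !inE eqxx orbT.
by rewrite !inE eq_sym (negbTE nz) /= => /eqP.
Qed.

Lemma onext_ne (S0 : {set V * V * V}) u z : S0 \subset T -> outer_next S0 u z -> u != z.
Proof. by move=> s /andP [/dedgeP [c h] _]; case/and3P: (distT HT (subT s h)). Qed.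

Lemma mixedA u z z' : outer_next S u z -> outer_next Sa u z ->
  [set u; z'] = [set a; b] -> outer_next Sa u z' -> z = z'.
Proof.
move=> hs ha E h'; case: (eqVneq z z') => // nzz'.
have sTa : Sa \subset T := subset_trans (subA hU) sT.
case/andP: (h') => hz' nz'.
have hz'S := dedge_sub (subA hU) hz'.
have dzu : dedge S z' u.
  case: (boolP (dedge S z' u)) => // n; case/negP: nzz'; apply/eqP.
  by apply: (uS hs); rewrite /outer_next hz'S n.
case/dedgeP: dzu => p hp.
have hpb : (z',u,p) \in Sb.
  by move: hp; rewrite (inSab hU) => /orP [h|//]; rewrite (dedgeI h) in nz'.
have := reach_start HT sT rS uS hs hz'S.
case/connectP => s pth Ez'; case/shortenP: pth Ez' => s' ps' us' _ Ez'.
pose P := [pred w | [forall q, ((u,w,q) \in S) ==> ((u,w,q) \in Sa)]].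
have Pz : P z.
  apply/forallP => q; apply/implyP => hq.
  case/andP: ha => /dedgeP [c hc] _.
  by rewrite (uniqT HT (subT sT hq) (subT sTa hc)).
have cl : forall p1 q1, arc S u p1 q1 -> P p1 -> q1 != z' -> P q1.
  move=> p1 q1 hpq /forallP Hp nq; apply/forallP => q2; apply/implyP => hq2.
  have hp1 : (u,p1,q1) \in Sa by move: (Hp q1); rewrite (hpq : (u,p1,q1) \in S).
  move: hq2; rewrite (inSab hU) => /orP [//|hb].
  have E2 := cab (rotS2 ra hp1) hb.
  have /and3P [_ _ nq1] := distT HT (subT sT hpq).
  have : q1 \in [set u; z'] by rewrite E -E2 !inE eqxx.
  by rewrite !inE (negbTE nq) orbF (negbTE nq1).
have [p' hp' Pp'] := path_avoid ps' us' (esym Ez') nzz' Pz cl.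
have hpS : (u,p,z') \in S := rotS rS hp.
have Ep := puniqT HT (subT sT hp') (subT sT hpS); subst p'.
have hpa : (u,p,z') \in Sa by move: (Pp' : P p) => /forallP /(_ z'); rewrite hpS.
by case: (notboth hI (rotS2 ra hpa) hpb).
Qed.

Lemma suA : su Sa.
Proof.
have sTa : Sa \subset T := subset_trans (subA hU) sT.
move=> u z z' h h'.
have nz := onext_ne sTa h; have nz' := onext_ne sTa h'.
case: (boolP ((u == a) || (u == b))) => hab; last first.
  have hv : vertex_of Sa u by case/andP: h => /dedgeP [c hc] _; apply: vertexI hc.
  have s1 : outer_next S u z by rewrite /outer_next -(dedgeA z hab hv) -(dedgeA' z hab hv).
  have s2 : outer_next S u z' by rewrite /outer_next -(dedgeA z' hab hv) -(dedgeA' z' hab hv).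
  exact: (uS s1 s2).
case: (startA h) (startA h') => [s1|p1] [s2|p2].
- exact: uS s1 s2.
- exact: mixedA s1 h p2 h'.
- by symmetry; apply: mixedA s2 h' p1 h.
- by apply: set2_other nz; rewrite p1 p2.
Qed.

Lemma connA : adj Sa a b -> conn Sa.
Proof.
move=> haa.
have va : vertex_of Sa a := adj_vertex ra haa.
have ab : forall q, vertex_of Sa q -> vertex_of Sb q -> connect (adj Sa) a q.
  move=> q h1 h2; case: (boolP ((q == a) || (q == b))) => hq; last by case: (L_side hq h1 h2).
  by case/orP: hq => /eqP ->; [apply: connect0 | apply: connect1].
pose P := [pred q | (vertex_of Sb q && ~~ vertex_of Sa q) || (vertex_of Sa q && connect (adj Sa) a q)].
have key : forall w, vertex_of Sa w -> connect (adj Sa) a w.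
  move=> w hw.
  have : P w.
    apply: (connect_fwd (P:=P) _ (cS (vertex_sub (subA hU) va) (vertex_sub (subA hU) hw))).
      move=> p q hpq Pp; move: hpq; rewrite adjSab => /orP [hA|hB].
        have vp : vertex_of Sa p := adj_vertex ra hA.
        have vq : vertex_of Sa q by apply: (adj_vertex ra (y:=p)); rewrite adjC.
        move/orP: Pp => [/andP [_ /negP //]|/andP [_ cp]].
        by apply/orP; right; rewrite vq /=; apply: connect_trans cp (connect1 hA).
      have vq : vertex_of Sb q by apply: (adj_vertex rb (y:=p)); rewrite adjC.
      case: (boolP (vertex_of Sa q)) => vqa; apply/orP; [right|left]; rewrite ?vqa ?vq //=.
      exact: ab.
    by apply/orP; right; rewrite va connect0.
  by move/orP => [/andP [_ /negP //]|/andP [_ ->]].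
have symm : connect_sym (adj Sa) := sym_connect_sym (fun x y => adjC Sa x y).
move=> x y hx hy; apply: connect_trans (key y hy).
by rewrite symm; apply: key.
Qed.

End Side2.

Lemma rot3 (V : finType) (t : V * V * V) : Defs.rot (Defs.rot (Defs.rot t)) = t.
Proof. by case: t => [[? ?] ?]. Qed.

Section Split.
Variable V : finType.
Variable T : {set V * V * V}.
Hypothesis HT : triangular_graph T.
Variables (S S1 S2 : {set V * V * V}) (v1 v2 a b x y : V).
Hypotheses (sT : S \subset T) (rS : rot_closed S) (uS : su S) (cS : conn S).
Hypothesis o12 : outer_next S v1 v2.
Hypothesis ch : chord S a b.
Hypothesis r1 : rot_closed S1.
Hypothesis U : S1 :|: S2 = S.
Hypothesis I : S1 :&: S2 = set0.
Hypothesis sh : forall p q r r', (p,q,r) \in S1 -> (q,p,r') \in S2 -> [set p; q] = [set a; b].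
Hypothesis o1 : outer_next S1 v1 v2.
Hypothesis xy : [set x; y] = [set a; b].
Hypothesis o2 : outer_next S2 x y.
Implicit Types (u w z p q r : V).

Let U' : S2 :|: S1 = S. Proof. by rewrite setUC. Qed.
Let I' : S2 :&: S1 = set0. Proof. by rewrite setIC. Qed.

Lemma r2 : rot_closed S2.
Proof.
move=> t h; have hS : t \in S by rewrite -U inE h orbT.
have := rS hS; rewrite -U inE => /orP [h1|//].
have := r1 (r1 h1); rewrite rot3 => h1'.
by case: (notboth I h1' h).
Qed.

Lemma cba p q r r' : (p,q,r) \in S2 -> (q,p,r') \in S1 -> [set p; q] = [set a; b].
Proof. by move=> h2 h1; rewrite setUC; apply: sh h1 h2. Qed.

Lemma sub1 : S1 \subset S. Proof. exact: subA U. Qed.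
Lemma sub2 : S2 \subset S. Proof. exact: subB U. Qed.
Lemma sT1 : S1 \subset T. Proof. exact: subset_trans sub1 sT. Qed.
Lemma sT2 : S2 \subset T. Proof. exact: subset_trans sub2 sT. Qed.

Definition isab p q := ((p == a) && (q == b)) || ((p == b) && (q == a)).

Lemma xyab : isab x y.
Proof. exact: set2_eq xy. Qed.

Lemma isabC p q : isab p q = isab q p.
Proof. by rewrite /isab orbC andbC [(q == b) && _]andbC. Qed.

Lemma pairne_xy p q : pairne p q x y = ~~ isab p q.
Proof.
by case/orP: xyab => /andP [/eqP -> /eqP ->] //; rewrite /pairne /isab orbC.
Qed.

Lemma mem_xy u : (u == x) || (u == y) = (u == a) || (u == b).
Proof. by case/orP: xyab => /andP [/eqP -> /eqP ->] //; rewrite orbC. Qed.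

Lemma isab_oe p q : isab p q -> outer_edge S p q = outer_edge S a b.
Proof. by case/orP => /andP [/eqP -> /eqP ->] //; rewrite outer_edgeC. Qed.

Lemma isab_adj (S0 : {set V * V * V}) p q : isab p q -> adj S0 p q = adj S0 a b.
Proof. by case/orP => /andP [/eqP -> /eqP ->] //; rewrite adjC. Qed.

Lemma pne_adj (S0 : {set V * V * V}) p q : ~~ pairne p q v1 v2 -> adj S0 p q = adj S0 v1 v2.
Proof. by rewrite /pairne negbK => /orP [] /andP [/eqP -> /eqP ->] //; rewrite adjC. Qed.

Lemma nochord_ab : ~~ outer_edge S a b.
Proof. by case/and4P: ch. Qed.
Lemma on_a : on_outer S a. Proof. by case/and4P: ch. Qed.
Lemma on_b : on_outer S b. Proof. by case/and4P: ch. Qed.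

Lemma face1 : exists d, (y,x,d) \in S1.
Proof.
case/andP: o2 => /dedgeP [c hc] n2.
have dS : dedge S x y := dedge_sub sub2 (dedgeI hc).
have : ~~ outer_next S x y.
  by apply: contra nochord_ab => h; rewrite -(isab_oe xyab) /outer_edge h.
rewrite /outer_next dS /= negbK => /dedgeP [d hd].
exists d; move: hd; rewrite -U inE => /orP [//|h].
by rewrite (dedgeI h) in n2.
Qed.

Lemma adj1 : adj S1 a b.
Proof. by case: face1 => d h; rewrite -(isab_adj _ xyab) /adj (dedgeI h) orbT. Qed.

Lemma adj2 : adj S2 a b.
Proof. by case/andP: o2 => h _; rewrite -(isab_adj _ xyab) /adj h. Qed.

Lemma same_face p q r r' : (p,q,r) \in S1 -> (p,q,r') \in S2 -> False.
Proof.
move=> h1 h2; have E := uniqT HT (subT sT1 h1) (subT sT2 h2); subst r'.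
exact (notboth I h1 h2).
Qed.

Lemma both_isab p q : adj S1 p q -> adj S2 p q -> isab p q.
Proof.
case/orP=> /dedgeP [r h1]; case/orP=> /dedgeP [r' h2].
- by case: (same_face h1 h2).
- exact: set2_eq (sh h1 h2).
- by rewrite isabC; apply: set2_eq (sh h1 h2).
- by case: (same_face h1 h2).
Qed.

Lemma nab12 : ~~ isab v1 v2.
Proof.
apply/negP => h; move: nochord_ab; rewrite -(isab_oe h) /outer_edge o12.
by [].
Qed.

Lemma Inv1 : Inv T S1.
Proof.
split; [exact: sT1 | exact: r1 | | ].
  exact: (suA HT sT rS uS U I r1 r2 sh cba).
exact: (connA HT sT rS uS cS U I r1 r2 sh cba adj1).
Qed.

Lemma Inv2 : Inv T S2.
Proof.
split; [exact: sT2 | exact: r2 | | ].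
  exact: (suA HT sT rS uS U' I' r2 r1 cba sh).
exact: (connA HT sT rS uS cS U' I' r2 r1 cba sh adj2).
Qed.


Lemma split_good O1 O2 : Pgood S1 v1 v2 O1 -> Pgood S2 x y O2 -> Pgood S v1 v2 (O1 :|: O2).
Proof.
case=> A1 A2 A3 [B1 B2 B3].
have EO2 p q : E O2 p q -> adj S2 p q && ~~ isab p q.
  by move/B1; rewrite pairne_xy.
have L12 := L_side HT sT rS uS U I r1 r2 sh cba.
split.
- move=> p q; rewrite EU => /orP [h|h].
    by have /andP [a0 pn] := A1 _ _ h; rewrite (adj_sub sub1 a0) pn.
  have /andP [a0 _] := EO2 _ _ h; rewrite (adj_sub sub2 a0) /=.
  case: (boolP (pairne p q v1 v2)) => // np.
  case/negP: nab12; apply: both_isab; first exact: outer_adj o1.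
  by rewrite -(pne_adj _ np).
- move=> p q a0 pn; rewrite !EU.
  case: (boolP (isab p q)) => ip.
    have n1 : E O2 p q = false by apply/negbTE/negP => /EO2 /andP [_]; rewrite ip.
    have n2 : E O2 q p = false by apply/negbTE/negP => /EO2 /andP [_]; rewrite isabC ip.
    rewrite n1 n2 !orbF; apply: A2 => //.
    by rewrite (isab_adj _ ip) adj1.
  move: (a0); rewrite (adjSab U) => /orP [h1|h2].
    have nh2 : ~~ adj S2 p q by apply: contra ip; apply: both_isab h1.
    have n1 : E O2 p q = false by apply/negbTE/negP => /EO2 /andP [h _]; rewrite h in nh2.
    have n2 : E O2 q p = false.
      by apply/negbTE/negP => /EO2 /andP [h _]; rewrite adjC h in nh2.
    by rewrite n1 n2 !orbF; apply: A2.
  have nh1 : ~~ adj S1 p q by apply: contra ip => h1; apply: both_isab h1 h2.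
  have n1 : E O1 p q = false by apply/negbTE/negP => /A1 /andP [h _]; rewrite h in nh1.
  have n2 : E O1 q p = false.
    by apply/negbTE/negP => /A1 /andP [h _]; rewrite adjC h in nh1.
  by rewrite n1 n2 /=; apply: B2 => //; rewrite pairne_xy.
- move=> u; rewrite /indeg.
  have -> : [set z | E (O1 :|: O2) z u] = [set z | E O1 z u] :|: [set z | E O2 z u].
    by apply/setP => z; rewrite !inE EU.
  rewrite cardsU.
  have -> : [set z | E O1 z u] :&: [set z | E O2 z u] = set0.
    apply/setP => z; rewrite !inE; apply/negbTE/negP => /andP [h1 h2].
    have /andP [a1 _] := A1 _ _ h1; have /andP [a2 ni] := EO2 _ _ h2.
    by rewrite (both_isab a1 a2) in ni.
  rewrite cards0 subn0.
  have -> : #|[set z | E O1 z u]| = indeg O1 u by [].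
  have -> : #|[set z | E O2 z u]| = indeg O2 u by [].
  rewrite A3 B3 /expected mem_xy.
  have hv1 : vertex_of S1 v1 by case/andP: o1 => /dedgeP [c h] _; apply: vertexI h.
  have hv2 : vertex_of S1 v2 by case/andP: o1 => /dedgeP [c h] _; apply: vertexI (rotS r1 h).
  case: ifP => h12.
    case: ifP => // hab.
    have v1u : vertex_of S1 u by case/orP: h12 => /eqP ->.
    have nv2 : vertex_of S2 u = false.
      by apply/negbTE/negP => v2u; apply: (L12 u); rewrite ?hab.
    by rewrite nv2; case: ifP => // /outer_vertex; rewrite nv2.
  case hab: ((u == a) || (u == b)).
    have -> : on_outer S u by case/orP: hab => /eqP ->; [exact: on_a | exact: on_b].
    have -> : on_outer S1 u.
      case: face1 => d hd.
      have oyx : outer_next S1 y x.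
        rewrite /outer_next (dedgeI hd) /=; apply/negP => /dedgeP [c hc].
        by case/andP: o2 => /dedgeP [c' hc'] _; case: (same_face hc hc').
      have : (u == x) || (u == y) by rewrite mem_xy.
      case/orP=> /eqP ->; last by apply/existsP; exists x.
      exact (L1 HT sT1 r1 oyx).
    by [].
  have nab : ~~ ((u == a) || (u == b)) by rewrite hab.
  rewrite /=.
  case: (boolP (vertex_of S1 u)) => v1u.
    have nv2 : vertex_of S2 u = false.
      by apply/negbTE/negP => v2u; apply: (L12 u nab).
    have -> : on_outer S2 u = false.
      by apply/negbTE/negP => /outer_vertex; rewrite nv2.
    rewrite nv2 addn0 (outerA HT sT rS uS U I r1 r2 sh cba nab v1u) (vertex_sub sub1 v1u).
    by case: ifP.
  have -> : on_outer S1 u = false by apply/negbTE/negP => /outer_vertex; rewrite (negbTE v1u).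
  rewrite ?(negbTE v1u) add0n.
  case: (boolP (vertex_of S2 u)) => v2u.
    rewrite (outerA HT sT rS uS U' I' r2 r1 cba sh nab v2u) (vertex_sub sub2 v2u).
    by case: ifP.
  have nvS : vertex_of S u = false.
    apply/negbTE/negP => /existsP [t /andP [ht hin]].
    move: ht; rewrite -U inE => /orP [h|h].
      by case/negP: v1u; apply/existsP; exists t; rewrite h.
    by case/negP: v2u; apply/existsP; exists t; rewrite h.
  have -> : on_outer S2 u = false by apply/negbTE/negP => /outer_vertex; rewrite (negbTE v2u).
  have -> : on_outer S u = false by apply/negbTE/negP => /outer_vertex; rewrite nvS.
  by rewrite ?(negbTE v2u) nvS.
Qed.

End Split.

Section Main.
Variable V : finType.
Variable T : {set V * V * V}.
Hypothesis HT : triangular_graph T.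

Lemma main_run S v1 v2 O : run S v1 v2 O -> Inv T S -> outer_next S v1 v2 -> Pgood S v1 v2 O.
Proof.
elim => {S v1 v2 O}.
- move=> S v1 v2 a b x y S1 S2 O1 O2 ch r1 U I sh o1 xy o2 _ IH1 _ IH2 [sT rS uS cS] o12.
  apply: (split_good HT sT rS uS o12 ch r1 U I sh o1 xy o2).
    exact: IH1 (Inv1 HT sT rS uS cS ch r1 U I sh xy o2) o1.
  exact: IH2 (Inv2 HT sT rS uS cS r1 U I sh xy o2) o2.
- move=> S v1 v2 v3 nch o23 now [sT rS _ _] o12.
  exact (stop_good HT sT rS o23 now).
- move=> S v1 v2 v3 O nch o23 hw runS' IH [sT rS uS cS] o12.
  apply: (rec_good HT sT rS uS cS o12 nch o23 hw); apply: IH.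
    exact (Inv' HT sT rS uS cS o12 nch o23 hw).
  have sT' : delete_vertex S v3 \subset T := subset_trans (delete_sub S v3) sT.
  rewrite /outer_next (R0 HT runS' sT' (delete_rot (v:=v3) rS)) /=.
  by case/andP: o12 => _ n; apply: contra n; apply: dedge_sub (delete_sub S v3).
Qed.
End Main.

Section Final.
Variable V : finType.
Variable T : {set V * V * V}.
Hypothesis HT : triangular_graph T.
Variables (p0 q0 r0 : V).
Hypothesis oT : (p0, q0, r0) \in T.
Implicit Types (u v w x y z a b c : V).

Let o := (p0, q0, r0).
Let S := inner_faces T o.
Let OF := outer_faces o.

Lemma dist0 : [&& p0 != q0, q0 != r0 & r0 != p0].
Proof. exact (distT HT oT). Qed.

Lemma OFP t : t \in OF -> [\/ t = (p0,q0,r0), t = (q0,r0,p0) | t = (r0,p0,q0)].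
Proof.
rewrite /OF /outer_faces !inE /= => /orP [/orP [] /eqP ->|/eqP ->];
  by [constructor 1 | constructor 2 | constructor 3].
Qed.

Lemma OFI1 : (p0,q0,r0) \in OF. Proof. by rewrite /OF /outer_faces !inE eqxx. Qed.
Lemma OFI2 : (q0,r0,p0) \in OF. Proof. by rewrite /OF /outer_faces !inE eqxx ?orbT. Qed.
Lemma OFI3 : (r0,p0,q0) \in OF. Proof. by rewrite /OF /outer_faces !inE eqxx ?orbT. Qed.

Lemma inS t : (t \in S) = (t \in T) && (t \notin OF).
Proof. by rewrite /S /inner_faces inE andbC. Qed.

Lemma sT0 : S \subset T.
Proof. by apply/subsetP => t; rewrite inS => /andP []. Qed.

Lemma OF_rot a b c : (b,c,a) \in OF -> (a,b,c) \in OF.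
Proof.
case/OFP => [[E1 E2 E3]|[E1 E2 E3]|[E1 E2 E3]]; subst; by [apply: OFI3 | apply: OFI1 | apply: OFI2].
Qed.

Lemma rS0 : rot_closed S.
Proof.
move=> [[a b] c]; rewrite !inS => /andP [h n] /=.
rewrite (rotS (tg_rot HT) h) /=; by apply: contra n; apply: OF_rot.
Qed.

Lemma OF_in a b c : (a,b,c) \in OF -> in_tri a o && in_tri b o.
Proof.
by case/OFP => [[E1 E2 E3]|[E1 E2 E3]|[E1 E2 E3]]; subst; rewrite /= !eqxx ?orbT.
Qed.

Lemma back_OF u b : outer_next S u b -> exists c, (b,u,c) \in OF.
Proof.
case/andP=> h n; have := tg_sym HT (dedgeT sT0 h) => /dedgeP [c hc].
exists c; apply/negPn/negP => nc; case/negP: n; apply: (dedgeI (c:=c)).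
by rewrite inS hc.
Qed.

Lemma su0 : su S.
Proof.
move=> u b b' h h'; have [c hc] := back_OF h; have [c' hc'] := back_OF h'.
case/and3P: dist0 => d1 d2 d3.
move: hc hc' => /OFP [] [E1 E2 E3] /OFP [] [F1 F2 F3]; subst;
  by rewrite ?eqxx in d1 d2 d3 *.
Qed.

Lemma adjST x y : adj S x y = adj T x y.
Proof.
apply/idP/idP; first exact: adj_sub sT0.
move=> h.
have h1 : dedge T x y by case/orP: h => // h; apply: (tg_sym HT).
have h2 : dedge T y x by case/orP: h => // h; apply: (tg_sym HT).
case/dedgeP: h1 => c hc; case/dedgeP: h2 => d hd.
case: (boolP ((x,y,c) \in OF)) => n1; last first.
  have hh : (x,y,c) \in S by rewrite inS hc n1.
  by rewrite /adj (dedgeI hh).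
case: (boolP ((y,x,d) \in OF)) => n2; last first.
  have hh : (y,x,d) \in S by rewrite inS hd n2.
  by rewrite /adj (dedgeI hh) orbT.
case/and3P: dist0 => d1 d2 d3.
move: n1 n2 => /OFP [] [E1 E2 E3] /OFP [] [F1 F2 F3]; subst;
  by rewrite ?eqxx in d1 d2 d3 *.
Qed.

Lemma cS0 : conn S.
Proof.
move=> a b _ _; rewrite (eq_connect (e' := adj T)); last by move=> x y; rewrite /= adjST.
exact (tg_conn HT a b).
Qed.

Lemma Inv0 : Inv T S.
Proof. split; [exact: sT0 | exact: rS0 | exact: su0 | exact: cS0]. Qed.


Lemma final_good v1 v2 O : outer_next S v1 v2 -> run S v1 v2 O ->
  internal_3_orientation T o (interior_restriction T o O).
Proof.
move=> o12 hr.
case: (main_run HT hr Inv0 o12) => P1 P2 P3.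
have v12o : in_tri v2 o && in_tri v1 o.
  by have [c hc] := back_OF o12; apply: OF_in hc.
have intne v : interior_vertex o v -> (v == v1) || (v == v2) = false.
  move=> hv; apply/negbTE/negP => /orP [] /eqP E1; subst v; move: hv;
    by rewrite /interior_vertex; case/andP: v12o => h2 h1; rewrite ?h1 ?h2.
have int_out v : interior_vertex o v -> ~~ on_outer S v.
  move=> hv; apply/negP => /existsP [b hb]; have [c hc] := back_OF hb.
  by have /andP [_ h] := OF_in hc; rewrite /interior_vertex h in hv.
have int_vert v : vertex_of S v.
  have [w hw] := tg_cover HT v.
  by apply: (adj_vertex rS0 (y:=w)); rewrite adjST.
have memA x y : ((x,y) \in interior_restriction T o O) = interior_edge T o x y && E O x y.
  by rewrite /interior_restriction inE.
have ie_pair x y : interior_edge T o x y -> pairne x y v1 v2.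
  case/andP=> _ hi; rewrite /pairne; apply/negP => /orP [] /andP [/eqP E1 /eqP E2];
    subst; move: hi; rewrite /interior_vertex; case/andP: v12o => h2 h1; rewrite ?h1 ?h2 //.
rewrite /internal_3_orientation; split.
- by move=> x y; rewrite memA => /andP [].
- move=> x y hi; rewrite !memA hi.
  have hi' : interior_edge T o y x by move: hi; rewrite /interior_edge adjC orbC.
  rewrite hi' /=.
  have ax : adj S x y by rewrite adjST; case/andP: hi.
  have := P2 x y ax (ie_pair _ _ hi).
  by case: (E O x y); case: (E O y x).
- move=> v hv.
  have -> : [set x | (x, v) \in interior_restriction T o O] = [set x | E O x v].
    apply/setP => x; rewrite [in LHS]inE memA [in RHS]inE; apply/idP/idP => [/andP [] //| h].
    rewrite h andbT /interior_edge.
    have /andP [a _] := P1 _ _ h.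
    by rewrite -adjST a /= hv orbT.
  have := P3 v; rewrite /indeg => ->.
  by rewrite /expected (intne v hv) (negbTE (int_out v hv)) (int_vert v).
Qed.

End Final.

Theorem proposition4p1 (V : finType) (T : {set V * V * V}) (o : V * V * V)
    (v1 v2 : V) (O : {set V * V * 'I_3}) :
  triangular_graph T ->
  o \in T ->
  outer_next (inner_faces T o) v1 v2 ->
  run (inner_faces T o) v1 v2 O ->
  internal_3_orientation T o (interior_restriction T o O).
Proof.
case: o => [[p0 q0] r0] HT oT.
exact (final_good HT oT (v1:=v1) (v2:=v2) (O:=O)).
Qed.
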